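(* For any field $K$ there is a Bruhat decomposition $$G_{m\wr d}=\bigsqcup_{w\in\Sigma_m\wr\Sigma_d}B_m^d\,w\,B_m^d$$ (disjoint union).
   Context: $\Sigma_m\wr\Sigma_d=\Sigma_m^d\rtimes\Sigma_d$ with multiplication $w(g_1,\dots,g_d)=(g_{w^{-1}(1)},\dots,g_{w^{-1}(d)})w$, regarded as a subgroup of $\Sigma_{md}$ via $(w_i)_i\sigma:(j-1)m+a\mapsto(\sigma(j)-1)m+w_{\sigma(j)}(a)$. Over $K$: $B_m\subseteq\mathrm{GL}_m(K)$ upper triangular matrices; $N_{m\wr d}\subseteq\mathrm{GL}_{md}(K)$ monomial matrices whose underlying permutation lies in $\Sigma_m\wr\Sigma_d$; $B_m^d$ block diagonal matrices $\mathrm{diag}(b_1,\dots,b_d)$, $b_i\in B_m$; $G_{m\wr d}=\langle B_m^d,N_{m\wr d}\rangle$. An element $w\in\Sigma_m\wr\Sigma_d$ stands for any monomial matrix in $N_{m\wr d}$ with underlying permutation $w$ (the double coset $B_m^dwB_m^d$ is independent of the choice). *)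

(* Defs.v *)
From HB Require Import structures.
From mathcomp Require Import all_boot all_order all_algebra all_fingroup.
From mathcomp Require Import zify.
Set Implicit Arguments. Unset Strict Implicit. Unset Printing Implicit Defensive.
Import GRing.Theory.
Local Open Scope ring_scope.

(* 0-based index: block j in 'I_d, position a in 'I_m  |->  j*m + a in 'I_(m*d)
   (the paper's (j-1)m + a with 1-based indices). *)
Lemma wr_idx_proof (m d : nat) (j : 'I_d) (a : 'I_m) : (j * m + a < m * d)%N.
Proof. have := ltn_ord j; have := ltn_ord a; nia. Qed.

Definition wr_idx (m d : nat) (j : 'I_d) (a : 'I_m) : 'I_(m * d) :=
  Ordinal (wr_idx_proof j a).

(* The image of Sigma_m wr Sigma_d in Sigma_{md}:
   (w_i)_i sigma : (j-1)m + a |-> (sigma(j)-1)m + w_{sigma(j)}(a). *)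
Definition in_wreath (m d : nat) (p : {perm 'I_(m * d)}) : Prop :=
  exists (w : 'I_d -> 'S_m) (s : 'S_d),
    forall (j : 'I_d) (a : 'I_m), p (wr_idx j a) = wr_idx (s j) (w (s j) a).

Definition monomial_of (K : fieldType) (n : nat) (M : 'M[K]_n) (p : {perm 'I_n}) : Prop :=
  forall i j : 'I_n, M i j != 0 <-> i = p j.

Definition in_N (K : fieldType) (m d : nat) (M : 'M[K]_(m * d)) : Prop :=
  exists p : {perm 'I_(m * d)}, in_wreath p /\ monomial_of M p.

(* B_m^d: invertible block-diagonal matrices diag(b_1,...,b_d), b_i upper triangular *)
Definition in_Bd (K : fieldType) (m d : nat) (M : 'M[K]_(m * d)) : Prop :=
  M \in unitmx /\
  forall (j j' : 'I_d) (a a' : 'I_m),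
    M (wr_idx j a) (wr_idx j' a') != 0 -> j = j' /\ (a <= a')%N.

Inductive generated (K : fieldType) (n : nat) (S : 'M[K]_n -> Prop) : 'M[K]_n -> Prop :=
  | gen_one : generated S 1%:M
  | gen_mul x y : S x -> generated S y -> generated S (x *m y)
  | gen_mulV x y : S x -> generated S y -> generated S (invmx x *m y).

Definition in_G (K : fieldType) (m d : nat) (M : 'M[K]_(m * d)) : Prop :=
  generated (fun X => in_Bd X \/ in_N X) M.

(* double coset B_m^d w B_m^d, w given by its permutation p, represented by any
   monomial matrix with underlying permutation p *)
Definition in_dcoset (K : fieldType) (m d : nat) (p : {perm 'I_(m * d)})
    (M : 'M[K]_(m * d)) : Prop :=
  exists b1 b2 nw : 'M[K]_(m * d),
    [/\ in_Bd b1, in_Bd b2, monomial_of nw p & M = b1 *m nw *m b2].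

(* Main.v *)
Require Import Defs.
From HB Require Import structures.
From mathcomp Require Import all_boot all_order all_algebra all_fingroup.
From mathcomp Require Import zify.
Set Implicit Arguments. Unset Strict Implicit. Unset Printing Implicit Defensive.
Import GRing.Theory.
Local Open Scope ring_scope.

Lemma blk_proof (m d : nat) (k : 'I_(m * d)) : (k %/ m < d)%N.
Proof. have := ltn_ord k; move: (nat_of_ord k) => x; case: (posnP m) => [->|mp]; first by rewrite mul0n.
by move=> h; rewrite ltn_divLR // mulnC. Qed.
Definition blk (m d : nat) (k : 'I_(m * d)) : 'I_d := Ordinal (blk_proof k).
Lemma inn_proof (m d : nat) (k : 'I_(m * d)) : (k %% m < m)%N.
Proof. have := ltn_ord k; move: (nat_of_ord k) => x; case: (posnP m) => [->|mp]; first by rewrite mul0n.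
by move=> _; rewrite ltn_mod. Qed.
Definition inn (m d : nat) (k : 'I_(m * d)) : 'I_m := Ordinal (inn_proof k).

Lemma wr_idxK (m d : nat) (k : 'I_(m * d)) : wr_idx (blk k) (inn k) = k.
Proof. by apply: val_inj => /=; rewrite -divn_eq. Qed.
Lemma blk_wr (m d : nat) (j : 'I_d) (a : 'I_m) : blk (wr_idx j a) = j.
Proof. apply: val_inj => /=; have h := ltn_ord a.
by rewrite divnMDl ?(leq_ltn_trans _ h) // divn_small // addn0. Qed.
Lemma inn_wr (m d : nat) (j : 'I_d) (a : 'I_m) : inn (wr_idx j a) = a.
Proof. apply: val_inj => /=; have h := ltn_ord a.
by rewrite modnMDl modn_small. Qed.
Lemma wr_idx_inj (m d : nat) (k l : 'I_(m * d)) :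
  blk k = blk l -> inn k = inn l -> k = l.
Proof. by move=> h1 h2; rewrite -(wr_idxK k) -(wr_idxK l) h1 h2. Qed.
Lemma wr_leq (m d : nat) (j : 'I_d) (a a' : 'I_m) :
  (wr_idx j a <= wr_idx j a')%N = (a <= a')%N.
Proof. by rewrite /= leq_add2l. Qed.

Definition upper (K : fieldType) (n : nat) (M : 'M[K]_n) :=
  forall k l : 'I_n, M k l != 0 -> (k <= l)%N.
Definition patt (K : fieldType) (m d : nat) (M : 'M[K]_(m * d)) (f : 'I_d -> 'I_d) :=
  forall k l, M k l != 0 -> blk k = f (blk l).
Definition good (K : fieldType) (m d : nat) (M : 'M[K]_(m * d)) :=
  [/\ M \in unitmx, patt M id & upper M].

Lemma Bd_good (K : fieldType) (m d : nat) (M : 'M[K]_(m * d)) : in_Bd M <-> good M.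
Proof.
split.
- case=> U H; split => // k l; rewrite -(wr_idxK k) -(wr_idxK l) => /H [e le];
  rewrite ?blk_wr //.
  by rewrite e wr_leq.
- case=> U P Up; split => // j j' a a' nz.
  have := P _ _ nz; rewrite !blk_wr => e; split => //.
  by move: (Up _ _ nz); rewrite e wr_leq.
Qed.

Lemma sum_nz (K : fieldType) (n : nat) (F : 'I_n -> K) :
  \sum_i F i != 0 -> exists i, F i != 0.
Proof.
case: (pickP (fun i => F i != 0)) => [i Hi|H]; first by exists i.
by rewrite big1 ?eqxx // => i _; move: (H i) => /negbFE/eqP.
Qed.

Lemma mul_nz (K : fieldType) (n : nat) (A B : 'M[K]_n) k l :
  (A *m B) k l != 0 -> exists i, A k i != 0 /\ B i l != 0.
Proof.
rewrite mxE => /sum_nz [i]; rewrite mulf_eq0 negb_or => /andP[h1 h2].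
by exists i.
Qed.

Lemma patt_mul (K : fieldType) (m d : nat) (A B : 'M[K]_(m * d)) f g :
  patt A f -> patt B g -> patt (A *m B) (f \o g).
Proof.
move=> PA PB k l /mul_nz [i [h1 h2]]; by rewrite (PA _ _ h1) (PB _ _ h2).
Qed.

Lemma upper_mul (K : fieldType) (n : nat) (A B : 'M[K]_n) :
  upper A -> upper B -> upper (A *m B).
Proof.
move=> PA PB k l /mul_nz [i [h1 h2]]; exact: leq_trans (PA _ _ h1) (PB _ _ h2).
Qed.

Lemma good_mul (K : fieldType) (m d : nat) (A B : 'M[K]_(m * d)) :
  good A -> good B -> good (A *m B).
Proof.
case=> UA PA QA [UB PB QB]; split; first by rewrite unitmx_mul UA UB.
- exact: (patt_mul PA PB).
- exact: upper_mul.
Qed.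

Lemma one_nz (K : fieldType) (n : nat) (k l : 'I_n) :
  (1%:M : 'M[K]_n) k l != 0 -> k = l.
Proof. by rewrite mxE; case: (eqVneq k l) => // _; rewrite /= eqxx. Qed.

Lemma good1 (K : fieldType) (m d : nat) : good (1%:M : 'M[K]_(m * d)).
Proof.
split; first exact: unitmx1.
- by move=> k l /one_nz ->.
- by move=> k l /one_nz ->.
Qed.

Definition E (K : fieldType) (m d : nat) (J : 'I_d) : 'M[K]_(m * d) :=
  diag_mx (\row_k ((blk k == J)%:R)).
Arguments E {K m d} J.

Lemma patt_E (K : fieldType) (m d : nat) (X : 'M[K]_(m * d)) (f : 'I_d -> 'I_d) J :
  injective f -> patt X f -> X *m E J = E (f J) *m X.
Proof.
move=> fi P; apply/matrixP => k l; rewrite mul_mx_diag mul_diag_mx !mxE.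
have [z|nz] := eqVneq (X k l) 0; first by rewrite z mulr0 mul0r.
by rewrite (P _ _ nz) (inj_eq fi) mulrC.
Qed.

Lemma patt_inv (K : fieldType) (m d : nat) (X : 'M[K]_(m * d)) (s : {perm 'I_d}) :
  X \in unitmx -> patt X s -> patt (invmx X) (s^-1)%g.
Proof.
move=> U P k l nz.
have e : E (blk k) *m invmx X = invmx X *m E (s (blk k)).
  have h := patt_E (blk k) (@perm_inj _ s) P.
  rewrite -[E _ *m _]mul1mx -(mulVmx U) -!mulmxA.
  rewrite (mulmxA X) h -!mulmxA mulmxV // mulmx1 //.
have := congr1 (fun M : 'M[K]_(m * d) => M k l) e; rewrite mul_mx_diag mul_diag_mx !mxE eqxx mul1r.
case: eqP => [-> _|_]; first by rewrite permK.
by rewrite mulr0 => z; move: nz; rewrite z eqxx.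
Qed.

Lemma monomial_unit (K : fieldType) (n : nat) (M : 'M[K]_n) (p : {perm 'I_n}) :
  monomial_of M p -> M \in unitmx.
Proof.
move=> H.
pose Y := \matrix_(a, b) (if p a == b then (M b a)^-1 else 0).
suff e : M *m Y = 1%:M by case: (mulmx1_unit e).
apply/matrixP => a b; rewrite !mxE (bigD1 ((p^-1)%g b)) //= big1 ?addr0; last first.
  move=> c hc; rewrite mxE; case: eqP => [e|]; last by rewrite mulr0.
  by move: hc; rewrite -e permK eqxx.
rewrite mxE permKV eqxx.
have nzb : M b ((p^-1)%g b) != 0 by apply/H; rewrite permKV.
case: eqP => [->|ne]; first by rewrite mulfV.
have : ~~ (M a ((p^-1)%g b) != 0) by apply/negP => /H; rewrite permKV.
by rewrite negbK => /eqP ->; rewrite mul0r.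
Qed.

Lemma wreath_patt (m d : nat) (p : {perm 'I_(m * d)}) :
  in_wreath p -> exists s : {perm 'I_d}, forall k, blk (p k) = s (blk k).
Proof.
case=> w [s H]; exists s => k.
by rewrite -{1}(wr_idxK k) H blk_wr.
Qed.

Lemma patt_wreath (m d : nat) (p : {perm 'I_(m * d)}) (s : {perm 'I_d}) :
  (forall k, blk (p k) = s (blk k)) -> in_wreath p.
Proof.
move=> H.
have winj : forall K, injective (fun a : 'I_m => inn (p (wr_idx ((s^-1)%g K) a))).
  move=> K a b e.
  have : p (wr_idx ((s^-1)%g K) a) = p (wr_idx ((s^-1)%g K) b).
    by apply: wr_idx_inj => //; rewrite !H !blk_wr.
  by move/perm_inj/(congr1 (@inn m d)); rewrite !inn_wr.
exists (fun K => perm (winj K)), s => j a.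
apply: wr_idx_inj; first by rewrite H !blk_wr.
by rewrite inn_wr permE /= permK.
Qed.

Lemma monomial_patt (K : fieldType) (m d : nat) (M : 'M[K]_(m * d)) p (s : {perm 'I_d}) :
  monomial_of M p -> (forall k, blk (p k) = s (blk k)) -> patt M s.
Proof. by move=> H Hs k l /H ->. Qed.

Definition BM (K : fieldType) (m d : nat) (M : 'M[K]_(m * d)) :=
  M \in unitmx /\ exists s : {perm 'I_d}, patt M s.

Lemma BM_mul (K : fieldType) (m d : nat) (A B : 'M[K]_(m * d)) :
  BM A -> BM B -> BM (A *m B).
Proof.
case=> UA [s PA] [UB [t PB]]; split; first by rewrite unitmx_mul UA UB.
exists (t * s)%g => k l nz; rewrite permM; exact: (patt_mul PA PB).
Qed.

Lemma gen_BM (K : fieldType) (m d : nat) (X : 'M[K]_(m * d)) :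
  in_Bd X \/ in_N X -> BM X /\ BM (invmx X).
Proof.
have aux : forall X : 'M[K]_(m * d), BM X -> BM X /\ BM (invmx X).
  move=> Y [U [s P]]; split; first by split => //; exists s.
  split; first by rewrite unitmx_inv.
  by exists (s^-1)%g; apply: patt_inv.
case=> [/Bd_good [U P _]|[p [Hw Hm]]]; apply: aux.
  split => //; exists 1%g => k l nz; rewrite perm1; exact: P.
have [s Hs] := wreath_patt Hw.
split; first exact: monomial_unit Hm.
by exists s; apply: monomial_patt Hm Hs.
Qed.

Lemma G_BM (K : fieldType) (m d : nat) (M : 'M[K]_(m * d)) : in_G M -> BM M.
Proof.
elim=> [|x y Sx _ IH|x y Sx _ IH].
- split; first exact: unitmx1.
  by exists 1%g => k l /one_nz ->; rewrite perm1.
- exact: BM_mul (proj1 (gen_BM Sx)) IH.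
- exact: BM_mul (proj2 (gen_BM Sx)) IH.
Qed.

Lemma det_upper (K : fieldType) (n : nat) (U : 'M[K]_n) :
  upper U -> \det U = \prod_k U k k.
Proof.
move=> Up; rewrite -det_tr det_trig; last first.
  apply/is_trig_mxP => i j lt; rewrite mxE; apply/eqP; apply/negP => /negP/Up.
  by rewrite leqNgt lt.
by apply: eq_bigr => k _; rewrite mxE.
Qed.

Lemma upper_unit_diag (K : fieldType) (n : nat) (U : 'M[K]_n) :
  upper U -> U \in unitmx -> forall k, U k k != 0.
Proof.
move=> Up; rewrite unitmxE unitfE det_upper // => /prodf_neq0 H k; exact: H.
Qed.

Lemma upper_diag_unit (K : fieldType) (n : nat) (U : 'M[K]_n) :
  upper U -> (forall k, U k k != 0) -> U \in unitmx.
Proof.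
move=> Up H; rewrite unitmxE unitfE det_upper //; by apply/prodf_neq0 => k _.
Qed.

Definition Rm (K : fieldType) (n : nat) (i : nat) : 'M[K]_n :=
  diag_mx (\row_k ((i <= k)%N%:R)).
Definition Cm (K : fieldType) (n : nat) (t : nat) : 'M[K]_n :=
  diag_mx (\row_k ((k < t)%N%:R)).
Arguments Rm {K n} i.
Arguments Cm {K n} t.

Lemma oner_nat_nz (K : fieldType) (b : bool) : ((b%:R : K) != 0) = b.
Proof. by case: b; rewrite ?oner_eq0 ?eqxx. Qed.

Lemma Rm_left (K : fieldType) (n : nat) (U : 'M[K]_n) i :
  upper U -> U \in unitmx -> exists2 V, V \in unitmx & Rm i *m U = V *m Rm i.
Proof.
move=> Up Uu.
pose V := \matrix_(k, l) (if (i <= k)%N then U k l else (k == l)%:R) : 'M[K]_n.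
exists V.
  apply: upper_diag_unit => [k l|k]; rewrite !mxE.
    by case: ifP => _; [exact: Up | rewrite oner_nat_nz => /eqP ->].
  by case: ifP => _; [exact: upper_unit_diag | rewrite eqxx oner_eq0].
apply/matrixP => k l; rewrite mul_mx_diag mul_diag_mx !mxE.
case: (leqP i k) => ik /=.
  have [z|nz] := eqVneq (U k l) 0; first by rewrite z mulr0 mul0r.
  by rewrite (leq_trans ik (Up _ _ nz)) mul1r mulr1.
case: (eqVneq k l) => [<-|]; last by rewrite mul0r mul0r.
by rewrite leqNgt ik mulr0 mul0r.
Qed.

Lemma Cm_right (K : fieldType) (n : nat) (U : 'M[K]_n) t :
  upper U -> U \in unitmx -> exists2 W, W \in unitmx & U *m Cm t = Cm t *m W.
Proof.
move=> Up Uu.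
pose W := \matrix_(k, l) (if (l < t)%N then U k l else (k == l)%:R) : 'M[K]_n.
exists W.
  apply: upper_diag_unit => [k l|k]; rewrite !mxE.
    by case: ifP => _; [exact: Up | rewrite oner_nat_nz => /eqP ->].
  by case: ifP => _; [exact: upper_unit_diag | rewrite eqxx oner_eq0].
apply/matrixP => k l; rewrite mul_mx_diag mul_diag_mx !mxE.
case: (ltnP l t) => lt /=.
  have [z|nz] := eqVneq (U k l) 0; first by rewrite z mulr0 mul0r.
  by rewrite (leq_ltn_trans (Up _ _ nz) lt) mul1r mulr1.
case: (eqVneq k l) => [e|]; last by rewrite mulr0 mulr0.
by rewrite -e in lt; rewrite ltnNge lt /= mul0r mulr0.
Qed.

Lemma rank_unit_l (K : fieldType) (n : nat) (V Y : 'M[K]_n) :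
  V \in unitmx -> \rank (V *m Y) = \rank Y.
Proof.
by move=> U; rewrite -mxrank_tr trmx_mul mxrankMfree ?mxrank_tr // row_free_unit unitmx_tr.
Qed.

Definition rk (K : fieldType) (n : nat) (i t : nat) (X : 'M[K]_n) :=
  \rank (Rm i *m X *m Cm t).

Lemma rk_inv (K : fieldType) (n : nat) (b1 b2 X : 'M[K]_n) i t :
  upper b1 -> b1 \in unitmx -> upper b2 -> b2 \in unitmx ->
  rk i t (b1 *m X *m b2) = rk i t X.
Proof.
move=> u1 U1 u2 U2; rewrite /rk.
have [V UV eV] := Rm_left i u1 U1.
have [W UW eW] := Cm_right t u2 U2.
rewrite !mulmxA eV -[_ *m b2 *m Cm t]mulmxA eW mulmxA.
by rewrite mxrankMfree ?row_free_unit // -!mulmxA rank_unit_l.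
Qed.

Lemma rank_diag (K : fieldType) (n : nat) (r : 'rV[K]_n) :
  \rank (diag_mx r) = (\sum_(k < n) (r ord0 k != 0%R))%N.
Proof.
elim: n r => [|n IH] r.
  by rewrite big_ord0; apply/eqP; rewrite -leqn0 rank_leq_row.
pose r' := r : 'rV_(1 + n).
have e : diag_mx r = block_mx (diag_mx (lsubmx r')) 0 0 (diag_mx (rsubmx r')) :> 'M_(1 + n).
  by rewrite -diag_mx_row hsubmxK.
have e2 : \rank (diag_mx r) = (\rank (diag_mx (lsubmx r')) + \rank (diag_mx (rsubmx r')))%N.
  by rewrite -rank_diag_block_mx -e.
rewrite e2 IH.
rewrite big_ord_recl; congr (_ + _)%N; last first.
  by apply: eq_bigr => k _; rewrite mxE; congr (r _ _ != 0); apply: val_inj.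
rewrite rank_rV; congr nat_of_bool; apply/idP/idP; apply: contra => /eqP H.
  apply/eqP/matrixP => a b; rewrite !ord1 !mxE eqxx /=.
  by rewrite mulr1n -H; congr (r _ _); apply: val_inj.
have := congr1 (fun M : 'M[K]_1 => M ord0 ord0) H; rewrite !mxE eqxx mulr1n => <-.
by apply/eqP; congr (r _ _); apply: val_inj.
Qed.

Definition cnt (n : nat) (p : {perm 'I_n}) (i t : nat) :=
  (\sum_(k < n) ((k < t) && (i <= p k)))%N.

Lemma rk_monomial (K : fieldType) (n : nat) (nw : 'M[K]_n) p i t :
  monomial_of nw p -> rk i t nw = cnt p i t.
Proof.
move=> H; rewrite /rk.
have -> : Rm i *m nw *m Cm t =
   nw *m diag_mx (\row_k (((k < t) && (i <= p k))%N%:R)).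
  apply/matrixP => a b; rewrite /Rm /Cm !mul_mx_diag mul_diag_mx !mxE.
  have [z|nz] := eqVneq (nw a b) 0; first by rewrite z mulr0 !mul0r.
  rewrite ((H _ _).1 nz); case: (i <= p b)%N; case: (b < t)%N;
    by rewrite /= ?mul0r ?mulr0 ?mul1r ?mulr1.
rewrite rank_unit_l ?(monomial_unit H) // rank_diag.
by apply: eq_bigr => k _; rewrite mxE oner_nat_nz.
Qed.

Lemma cnt_step (n : nat) (p : {perm 'I_n}) i (j : 'I_n) :
  cnt p i j.+1 = (cnt p i j + (i <= p j))%N.
Proof.
rewrite /cnt (bigD1 j) //= [in RHS](bigD1 j) //= ltnSn ltnn /=.
rewrite addnC; congr (_ + _)%N; apply: eq_bigr => k kj.
rewrite ltnS leq_eqVlt; case: eqP => [/val_inj e|] //.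
by rewrite e eqxx in kj.
Qed.

Lemma cnt_inj (n : nat) (p q : {perm 'I_n}) :
  (forall i t, cnt p i t = cnt q i t) -> p = q.
Proof.
move=> H; apply/permP => j; apply: val_inj; apply/eqP; rewrite eqn_leq.
have key : forall i, (i <= p j)%N = (i <= q j)%N.
  move=> i; have := H i j.+1; rewrite !cnt_step H => /eqP.
  by rewrite eqn_add2l => /eqP; case: (i <= p j)%N; case: (i <= q j)%N.
by rewrite -key leqnn key leqnn.
Qed.

Lemma dcoset_unique (K : fieldType) (m d : nat) (p q : {perm 'I_(m * d)})
  (M : 'M[K]_(m * d)) : in_dcoset p M -> in_dcoset q M -> p = q.
Proof.
move=> [b1 [b2 [nw [/Bd_good [U1 _ u1] /Bd_good [U2 _ u2] Hn e]]]].
move=> [c1 [c2 [nw' [/Bd_good [V1 _ v1] /Bd_good [V2 _ v2] Hn' e']]]].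
apply: cnt_inj => i t.
rewrite -(rk_monomial i t Hn) -(rk_monomial i t Hn').
by rewrite -(rk_inv _ _ _ u1 U1 u2 U2) -e e' rk_inv.
Qed.

Definition RS (K : fieldType) (n : nat) (j : 'I_n) (v : 'I_n -> K) : 'M[K]_n :=
  \matrix_(k, l) (if k == j then v l else 0).
Definition CS (K : fieldType) (n : nat) (r : 'I_n) (u : 'I_n -> K) : 'M[K]_n :=
  \matrix_(k, l) (if l == r then u k else 0).

Lemma mul_RS (K : fieldType) (n : nat) (X : 'M[K]_n) j v a b :
  (X *m RS j v) a b = X a j * v b.
Proof.
rewrite mxE (bigD1 j) //= big1 ?addr0; first by rewrite mxE eqxx.
by move=> i ij; rewrite mxE (negbTE ij) mulr0.
Qed.

Lemma mul_CS (K : fieldType) (n : nat) (X : 'M[K]_n) r u a b :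
  (CS r u *m X) a b = u a * X r b.
Proof.
rewrite mxE (bigD1 r) //= big1 ?addr0; first by rewrite mxE eqxx.
by move=> i ir; rewrite mxE (negbTE ir) mul0r.
Qed.

Definition strict (K : fieldType) (m d : nat) (X : 'M[K]_(m * d)) :=
  forall k l, X k l != 0 -> blk k = blk l /\ (k < l)%N.

Lemma nil_inv (K : fieldType) (n : nat) (X : 'M[K]_n) :
  X *m X = 0 -> (1%:M + X) *m (1%:M - X) = 1%:M /\ (1%:M - X) *m (1%:M + X) = 1%:M.
Proof.
move=> h; split.
  rewrite mulmxDl !mulmxBr !mul1mx !mulmx1 h subr0.
  by rewrite subrK.
rewrite mulmxBl !mulmxDr !mul1mx !mulmx1 h addr0.
by rewrite addrK.
Qed.

Lemma strict_good (K : fieldType) (m d : nat) (X : 'M[K]_(m * d)) :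
  strict X -> X *m X = 0 -> good (1%:M + X) /\ good (1%:M - X).
Proof.
move=> S h; have [e1 e2] := nil_inv h.
have aux : forall k l, (k == l)%:R + X k l != 0 \/ (k == l)%:R - X k l != 0 ->
   blk k = blk l /\ (k <= l)%N.
  move=> k l H.
  have [z|nz] := eqVneq (X k l) 0.
    by move: H; rewrite z addr0 subr0 oner_nat_nz; case=> /eqP ->.
  by have [-> /ltnW] := S _ _ nz.
split; split.
- by case: (mulmx1_unit e1).
- by move=> k l; rewrite !mxE => H; case: (aux k l (or_introl H)).
- by move=> k l; rewrite !mxE => H; case: (aux k l (or_introl H)).
- by case: (mulmx1_unit e2).
- by move=> k l; rewrite !mxE => H; case: (aux k l (or_intror H)).
- by move=> k l; rewrite !mxE => H; case: (aux k l (or_intror H)).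
Qed.

Lemma col_nz (K : fieldType) (n : nat) (A : 'M[K]_n) j :
  A \in unitmx -> exists k, A k j != 0.
Proof.
case: (pickP (fun k => A k j != 0)) => [k H|H] U; first by exists k.
move: U; rewrite unitmxE unitfE (expand_det_col A j) big1 ?eqxx // => i _.
by move: (H i) => /negbFE/eqP ->; rewrite mul0r.
Qed.

Lemma lowest (K : fieldType) (n : nat) (A : 'M[K]_n) j k0 :
  A k0 j != 0 -> exists r, A r j != 0 /\ forall k, A k j != 0 -> (k <= r)%N.
Proof.
move=> h; pose Q := [pred k | A k j != 0].
have : (0 < #|Q|)%N by apply/card_gt0P; exists k0.
case/(eq_bigmax_cond (fun k : 'I_n => nat_of_ord k)) => r Pr e.
exists r; split => // k Pk; rewrite -e.
exact: (@leq_bigmax_cond _ (fun i => i \in Q) (fun k : 'I_n => nat_of_ord k) k Pk).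
Qed.

Definition Done (K : fieldType) (n : nat) (A : 'M[K]_n) (t : nat) :=
  forall l : 'I_n, (l < t)%N -> exists r, [/\ A r l != 0,
    (forall k, k != r -> A k l = 0) & (forall l', l' != l -> A r l' = 0)].

Lemma step (K : fieldType) (m d : nat) (A : 'M[K]_(m * d)) (s : {perm 'I_d}) t
  (tn : (t < m * d)%N) :
  A \in unitmx -> patt A s -> Done A t ->
  exists U1 U2 A2, [/\ good U1, good U2, A = U1 *m A2 *m U2,
     (A2 \in unitmx /\ patt A2 s) & Done A2 t.+1].
Proof.
move=> UA PA DA; pose j := Ordinal tn.
have [k0 k0nz] := col_nz j UA.
have [r [rnz rmax]] := lowest k0nz.
pose v := fun l : 'I_(m * d) => if (j < l)%N then A r l / A r j else 0.
pose X2 := RS j v.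
have S2 : strict X2.
  move=> k l; rewrite mxE; case: ifP => [/eqP ->|_]; last by rewrite eqxx.
  rewrite /v; case: ifP => jl; last by rewrite eqxx.
  rewrite mulf_eq0 negb_or => /andP[h1 _]; split => //.
  by apply: (@perm_inj _ s); rewrite -(PA _ _ h1) -(PA _ _ rnz).
have N2 : X2 *m X2 = 0.
  by apply/matrixP => a b; rewrite mul_RS !mxE /v ltnn; case: eqP => _;
    rewrite ?mulr0 ?mul0r.
have [G2p G2m] := strict_good S2 N2.
have [e2a e2b] := nil_inv N2.
pose A1 := A *m (1%:M - X2).
have A1E : forall k l, A1 k l = A k l - A k j * v l.
  by move=> k l; rewrite /A1 mulmxBr mulmx1 -(mul_RS A) !mxE.
have A1rnz : A1 r j = A r j by rewrite A1E /v ltnn mulr0 subr0.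
have A1r : forall l, l != j -> A1 r l = 0.
  move=> l lj; rewrite A1E /v; case: ifP => jl.
    by rewrite mulrC divfK // subrr.
  rewrite mulr0 subr0.
  have ltl : (l < t)%N.
    by rewrite ltn_neqAle leqNgt jl andbT; apply: contra lj => /eqP e;
      apply/eqP/val_inj.
  have [rl [h1 h2 h3]] := DA l ltl.
  case: (eqVneq (A r l) 0) => // H.
  case: (eqVneq r rl) => [e|nr]; last by move: H; rewrite h2 // eqxx.
  by move: rnz; rewrite e h3 ?eqxx // eq_sym.
pose u := fun k : 'I_(m * d) => if (k < r)%N then A1 k j / A1 r j else 0.
pose X1 := CS r u.
have S1 : strict X1.
  move=> k l; rewrite mxE; case: ifP => [/eqP ->|_]; last by rewrite eqxx.
  rewrite /u; case: ifP => kr; last by rewrite eqxx.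
  rewrite mulf_eq0 negb_or => /andP[h1 _]; split => //.
  rewrite A1E /v ltnn mulr0 subr0 in h1.
  by rewrite (PA _ _ h1) (PA _ _ rnz).
have N1 : X1 *m X1 = 0.
  by apply/matrixP => a b; rewrite mul_CS !mxE /u ltnn; case: eqP => _;
    rewrite ?mulr0 ?mul0r.
have [G1p G1m] := strict_good S1 N1.
have [e1a e1b] := nil_inv N1.
pose A2 := (1%:M - X1) *m A1.
have A2E : forall k l, A2 k l = if l == j then (if k == r then A r j else 0) else A1 k l.
  move=> k l.
  have -> : A2 k l = A1 k l - u k * A1 r l.
    by rewrite /A2 mulmxBl mul1mx -(mul_CS A1 r u) !mxE.
  case: eqP => [->|/eqP lj]; last by rewrite A1r // mulr0 subr0.
  rewrite A1rnz /u; case: eqP => [->|/eqP kr]; first by rewrite ltnn mul0r subr0 A1rnz.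
  case: ifP => kr'.
    by rewrite -A1rnz divfK ?A1rnz // subrr.
  rewrite mul0r subr0 A1E /v ltnn mulr0 subr0.
  case: (eqVneq (A k j) 0) => // H.
  have := rmax _ H; rewrite leq_eqVlt kr' orbF => /eqP/val_inj e.
  by rewrite e eqxx in kr.
exists (1%:M + X1), (1%:M + X2), A2; split => //.
- by rewrite /A2 mulmxA e1a mul1mx /A1 -mulmxA e2b mulmx1.
- split; first by rewrite /A2 /A1 !unitmx_mul UA; case: G1m => ->; case: G2m => ->.
  have PA1 : patt A1 s.
    by move=> k l nz; case: G2m => _ P2 _; rewrite (patt_mul PA P2 nz).
  by move=> k l nz; case: G1m => _ P1 _; rewrite (patt_mul P1 PA1 nz).
- move=> l; rewrite ltnS leq_eqVlt => /orP[/eqP e|ltl].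
    have lj : l = j by apply: val_inj.
    exists r; split.
    + by rewrite A2E lj !eqxx.
    + by move=> k kr; rewrite A2E lj eqxx (negbTE kr).
    + move=> l' l'l; have l'j : l' != j by rewrite -lj.
      by rewrite A2E (negbTE l'j) A1r.
  have [rl [h1 h2 h3]] := DA l ltl.
  have lj : l != j.
    by apply/negP => /eqP e; move: ltl; rewrite e ltnn.
  have rlr : rl != r.
    apply/negP => /eqP e; apply/negP: rnz; rewrite negbK -e h3 //.
    by rewrite eq_sym.
  exists rl; split.
  + by rewrite A2E (negbTE lj) A1E /v ltnNge (ltnW ltl) mulr0 subr0.
  + by move=> k kr; rewrite A2E (negbTE lj) A1E /v ltnNge (ltnW ltl) mulr0 subr0 h2.
  + move=> l' l'l; rewrite A2E; case: eqP => [_|_]; first by rewrite (negbTE rlr).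
    rewrite A1E h3 // (h3 j); first by rewrite mul0r subr0.
    by rewrite eq_sym.
Qed.

Lemma iterate (K : fieldType) (m d : nat) (M : 'M[K]_(m * d)) (s : {perm 'I_d}) t :
  M \in unitmx -> patt M s -> (t <= m * d)%N ->
  exists b1 b2 A, [/\ good b1, good b2, M = b1 *m A *m b2,
     (A \in unitmx /\ patt A s) & Done A t].
Proof.
move=> UM PM; elim: t => [_|t IH tn].
  by exists 1%:M, 1%:M, M; split; rewrite ?mul1mx ?mulmx1 //; try exact: good1.
have [b1 [b2 [A [g1 g2 e [UA PA] DA]]]] := IH (ltnW tn).
have [U1 [U2 [A2 [h1 h2 eA [UA2 PA2] DA2]]]] := step tn UA PA DA.
exists (b1 *m U1), (U2 *m b2), A2; split => //.
- exact: good_mul.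
- exact: good_mul.
- by rewrite e eA !mulmxA.
Qed.

Lemma exists_dcoset (K : fieldType) (m d : nat) (M : 'M[K]_(m * d)) :
  BM M -> exists p : {perm 'I_(m * d)}, in_wreath p /\ in_dcoset p M.
Proof.
case=> UM [s PM].
have [b1 [b2 [A [g1 g2 e [UA PA] DA]]]] := iterate UM PM (leqnn (m * d)).
pose pf := fun l : 'I_(m * d) => odflt l [pick r | A r l != 0].
have DA' : forall l, exists r, [/\ A r l != 0,
    (forall k, k != r -> A k l = 0) & (forall l', l' != l -> A r l' = 0)].
  by move=> l; apply: DA; exact: ltn_ord.
have pfnz : forall l, A (pf l) l != 0.
  move=> l; rewrite /pf; case: pickP => [r H|H] //=.
  by have [r [h _ _]] := DA' l; move: (H r); rewrite h.
have uniq_r : forall l i, A i l != 0 -> i = pf l.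
  move=> l i nz; have [r [h1 h2 h3]] := DA' l.
  have e1 : i = r by case: (eqVneq i r) => // /h2 z; move: nz; rewrite z eqxx.
  have e2 : pf l = r.
    by case: (eqVneq (pf l) r) => // /h2 z; move: (pfnz l); rewrite z eqxx.
  by rewrite e1 e2.
have pf_inj : injective pf.
  move=> l l' e'.
  have [r [h1 h2 h3]] := DA' l.
  have e1 : pf l = r.
    by case: (eqVneq (pf l) r) => // /h2 z; move: (pfnz l); rewrite z eqxx.
  case: (eqVneq l' l) => // /h3 z.
  by move: (pfnz l'); rewrite -e' e1 z eqxx.
pose p := perm pf_inj.
have Hm : monomial_of A p.
  move=> i l; rewrite permE; split; first exact: uniq_r.
  by move=> ->.
exists p; split.
  apply: (@patt_wreath m d p s) => k.
  by apply: PA; rewrite permE.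
by exists b1, b2, A; split => //; apply/Bd_good.
Qed.

Theorem corollary2p7 (K : fieldType) (m d : nat) :
  (forall M : 'M[K]_(m * d),
     in_G M <-> exists p : {perm 'I_(m * d)}, in_wreath p /\ in_dcoset p M) /\
  (forall (p q : {perm 'I_(m * d)}) (M : 'M[K]_(m * d)),
     in_wreath p -> in_wreath q -> in_dcoset p M -> in_dcoset q M -> p = q).
Proof.
split.
- move=> M; split.
  + by move/G_BM; apply: exists_dcoset.
  + case=> p [Hw [b1 [b2 [nw [B1 B2 Hn ->]]]]].
    have -> : b1 *m nw *m b2 = b1 *m (nw *m (b2 *m 1%:M)) by rewrite mulmx1 mulmxA.
    apply: gen_mul; first by left.
    apply: gen_mul; first by right; exists p.
    apply: gen_mul; first by left.
    exact: gen_one.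
- move=> p q M _ _; exact: dcoset_unique.
Qed.
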